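(* Let $A\in\mathbb{R}^{n_x\times n_x}$, $B\in\mathbb{R}^{n_x\times n_u}$, $C\in\mathbb{R}^{n_y\times n_x}$ and $D\in\mathbb{R}^{n_y\times n_u}$. Let $0<\mu_u\le\nu_u$ and $0<\mu_y\le\nu_y$, and set $\alpha_u=\frac{\nu_u+\mu_u}{2}$, $\beta_u=\frac{\nu_u-\mu_u}{2}$, $\alpha_y=\frac{\nu_y+\mu_y}{2}$, $\beta_y=\frac{\nu_y-\mu_y}{2}$. Suppose the following two LMIs are feasible. (a) There exist a symmetric $P\succ0$, $Y\in\mathbb{R}^{n_x\times n_x}$, $X\in\mathbb{R}^{n_u\times n_x}$, $\sigma>0$ and $\rho_c\in(0,1)$ with $$\begin{bmatrix}(1-\rho_c)P-\sigma BB^\mathsf{T} & AY+\alpha_uBX & 0\\ \star & Y^\mathsf{T}+Y-P & \beta_uX^\mathsf{T}\\ \star&\star&\sigma I\end{bmatrix}\succ0.$$ Set $K=XY^{-1}$. (b) There exist a symmetric $Q\succ0$, $U\in\mathbb{R}^{n_x\times n_x}$, $V\in\mathbb{R}^{n_x\times n_y}$, $\eta>0$ and $\rho_o\in(0,1)$ with $$\begin{bmatrix}(1-\rho_o)Q-\eta C^\mathsf{T}C & (UA+\alpha_yVC)^\mathsf{T} & 0\\ \star & U+U^\mathsf{T}-Q & \beta_yV\\ \star&\star&\eta I\end{bmatrix}\succ0.$$ Set $L=U^{-1}V$. Let $\mathcal{S}_u:\mathbb{R}^{n_u}\to\mathbb{R}^{n_u}$ be continuously differentiable with $\mathcal{S}_u(0)=0$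 and $\|\mathcal{J}^u(v)-\alpha_uI\|\le\beta_u$ for all $v$. Let $\mathcal{S}_y:\mathbb{R}^{n_y}\to\mathbb{R}^{n_y}$ be continuously differentiable with $\|\mathcal{J}^y(z)-\alpha_yI\|\le\beta_y$ for all $z$. Consider the closed-loop system $$x_{k+1}=Ax_k+B\mathcal{S}_u(u_k),\quad \hat x_{k+1}=A\hat x_k+B\mathcal{S}_u(u_k)+L(\hat y_k-y_k),$$ $$y_k=\mathcal{S}_y(Cx_k+D\mathcal{S}_u(u_k)),\quad \hat y_k=\mathcal{S}_y(C\hat x_k+D\mathcal{S}_u(u_k)),\quad u_k=K\hat x_k.$$ Then this closed-loop system is globally exponentially stable. That is, there exist constants $c>0$ and $\lambda\in(0,1)$ such that for all initial conditions $x_0,\hat x_0$ and all $k\ge0$, $$\|x_k\|+\|\hat x_k-x_k\|\le c\,\lambda^k\big(\|x_0\|+\|\hat x_0-x_0\|\big).$$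
   Context: $\|\cdot\|$ denotes the Euclidean norm and the induced spectral matrix norm. $M\succ0$ means $M$ is symmetric positive definite, and $\star$ denotes the blocks determined by symmetry. $\mathcal{J}^u$ and $\mathcal{J}^y$ denote the Jacobians of $\mathcal{S}_u$ and $\mathcal{S}_y$. The Jacobian conditions are the uncertainty-set description the paper uses for bi-Lipschitz scaffolding nonlinearities; in the scalar case they are equivalent to the derivative lying in $[\mu,\nu]$. *)

(* Defs.v *)
From HB Require Import structures.
From mathcomp Require Import all_boot all_order all_algebra.
From mathcomp Require Import all_classical all_reals all_analysis.
Set Implicit Arguments. Unset Strict Implicit. Unset Printing Implicit Defensive.
Import Order.TTheory GRing.Theory Num.Theory.
Import numFieldNormedType.Exports.
Local Open Scope ring_scope.

Definition enorm (R : realType) n (v : 'cV[R]_n) : R :=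
  Num.sqrt (\sum_(i < n) v i 0 ^+ 2).

(* ||M|| <= b for the spectral (Euclidean-induced) matrix norm:
   ||M w|| <= b ||w|| for every vector w. *)
Definition spec_norm_le (R : realType) m n (M : 'M[R]_(m, n)) (b : R) : Prop :=
  forall w : 'cV[R]_n, enorm (M *m w) <= b * enorm w.

Definition posdef (R : realType) n (M : 'M[R]_n) : Prop :=
  M^T = M /\ forall v : 'cV[R]_n, v != 0 -> 0 < (v^T *m M *m v) 0 0.

Definition jac (R : realType) n m (f : 'cV[R]_n -> 'cV[R]_m) (v : 'cV[R]_n)
  : 'M[R]_(m, n) :=
  \matrix_(i < m, j < n) ('d f v (delta_mx j 0 : 'cV[R]_n)) i 0.

Definition C1 (R : realType) n m (f : 'cV[R]_n -> 'cV[R]_m) : Prop :=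
  (forall v, differentiable f v) /\ continuous (jac f).

(* Symmetric 3x3 block matrix [[M11, M12, M13]; [*, M22, M23]; [*, *, M33]],
   the starred blocks being the transposes determined by symmetry. *)
Definition sym3 (R : realType) p q r (M11 : 'M[R]_p) (M12 : 'M[R]_(p, q))
  (M13 : 'M[R]_(p, r)) (M22 : 'M[R]_q) (M23 : 'M[R]_(q, r)) (M33 : 'M[R]_r)
  : 'M[R]_(p + (q + r)) :=
  block_mx M11 (row_mx M12 M13)
           (col_mx M12^T M13^T) (block_mx M22 M23 M23^T M33).

(* Main.v *)
Require Import Defs.
From HB Require Import structures.
From mathcomp Require Import all_boot all_order all_algebra.
From mathcomp Require Import all_classical all_reals all_analysis.
From mathcomp Require Import ring lra.
Import Order.TTheory GRing.Theory Num.Theory.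
Import numFieldNormedType.Exports.
Set Implicit Arguments. Unset Strict Implicit. Unset Printing Implicit Defensive.
Local Open Scope ring_scope.
Section Dot.
Variable R : realType.

Definition dot n (u v : 'cV[R]_n) : R := (u^T *m v) 0 0.
Definition nsq n (v : 'cV[R]_n) : R := dot v v.

Lemma dotE n (u v : 'cV[R]_n) : dot u v = \sum_(i < n) u i 0 * v i 0.
Proof. by rewrite /dot mxE; apply: eq_bigr => i _; rewrite mxE. Qed.

Lemma dotC n (u v : 'cV[R]_n) : dot u v = dot v u.
Proof. by rewrite !dotE; apply: eq_bigr => i _; rewrite mulrC. Qed.

Lemma dotDl n (u w v : 'cV[R]_n) : dot (u + w) v = dot u v + dot w v.
Proof. by rewrite /dot linearD /= mulmxDl mxE. Qed.
Lemma dotDr n (u w v : 'cV[R]_n) : dot v (u + w) = dot v u + dot v w.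
Proof. by rewrite /dot mulmxDr mxE. Qed.
Lemma dotZl n a (u v : 'cV[R]_n) : dot (a *: u) v = a * dot u v.
Proof. by rewrite /dot linearZ /= -scalemxAl mxE. Qed.
Lemma dotZr n a (u v : 'cV[R]_n) : dot u (a *: v) = a * dot u v.
Proof. by rewrite /dot -scalemxAr mxE. Qed.
Lemma dotNl n (u v : 'cV[R]_n) : dot (- u) v = - dot u v.
Proof. by rewrite -scaleN1r dotZl mulN1r. Qed.
Lemma dotNr n (u v : 'cV[R]_n) : dot u (- v) = - dot u v.
Proof. by rewrite -scaleN1r dotZr mulN1r. Qed.
Lemma dotBl n (u w v : 'cV[R]_n) : dot (u - w) v = dot u v - dot w v.
Proof. by rewrite dotDl dotNl. Qed.
Lemma dotBr n (u w v : 'cV[R]_n) : dot v (u - w) = dot v u - dot v w.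
Proof. by rewrite dotDr dotNr. Qed.
Lemma dot0l n (v : 'cV[R]_n) : dot 0 v = 0.
Proof. by rewrite dotE big1 // => i _; rewrite mxE mul0r. Qed.
Lemma dot0r n (v : 'cV[R]_n) : dot v 0 = 0.
Proof. by rewrite dotC dot0l. Qed.
Lemma dotMr m n (M : 'M[R]_(m, n)) u v : dot u (M *m v) = dot (M^T *m u) v.
Proof. by rewrite /dot trmx_mul trmxK mulmxA. Qed.
Lemma dotMl m n (M : 'M[R]_(m, n)) u v : dot (M *m u) v = dot u (M^T *m v).
Proof. by rewrite dotMr trmxK. Qed.
Lemma dot1 n (u v : 'cV[R]_n) : dot u (1%:M *m v) = dot u v.
Proof. by rewrite mul1mx. Qed.

Lemma nsq_ge0 n (v : 'cV[R]_n) : 0 <= nsq v.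
Proof. by rewrite /nsq dotE sumr_ge0 // => i _; rewrite -expr2 sqr_ge0. Qed.

Lemma nsq_eq0 n (v : 'cV[R]_n) : nsq v = 0 -> v = 0.
Proof.
rewrite /nsq dotE => /eqP; rewrite psumr_eq0; last by move=> i _; rewrite -expr2 sqr_ge0.
move=> /allP H; apply/matrixP => i j; rewrite ord1 mxE.
have := H i (mem_index_enum i); rewrite -expr2 sqrf_eq0 => /eqP //.
Qed.

Lemma enormE n (v : 'cV[R]_n) : enorm v = Num.sqrt (nsq v).
Proof. by rewrite /enorm /nsq dotE; congr Num.sqrt; apply: eq_bigr => i _; rewrite expr2. Qed.

Lemma enorm_sqr n (v : 'cV[R]_n) : enorm v ^+ 2 = nsq v.
Proof. by rewrite enormE sqr_sqrtr // nsq_ge0. Qed.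

Lemma enorm_ge0 n (v : 'cV[R]_n) : 0 <= enorm v.
Proof. by rewrite enormE sqrtr_ge0. Qed.

Lemma cauchy_dot n (u v : 'cV[R]_n) : dot u v ^+ 2 <= nsq u * nsq v.
Proof.
have [u0|uneq] := eqVneq (nsq u) 0.
  by rewrite u0 (nsq_eq0 u0) dot0l expr0n mul0r.
have up : 0 < nsq u by rewrite lt_def uneq nsq_ge0.
set t := dot u v / nsq u.
have := nsq_ge0 (v - t *: u).
rewrite /nsq dotBl !dotBr !dotZl !dotZr (dotC v u) -/(nsq u) -/(nsq v).
rewrite /t => H.
have H2 : 0 <= nsq u * (nsq v - dot u v ^+ 2 / nsq u).
  apply: mulr_ge0; first exact: ltW.
  move: H; congr (0 <= _); field; exact: uneq.
move: H2; rewrite mulrBr mulrCA divff // mulr1 subr_ge0 mulrC; apply.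
Qed.

Lemma cs_eps n (u v : 'cV[R]_n) : 2 * dot u v <= nsq u + nsq v.
Proof.
have := nsq_ge0 (u - v); rewrite /nsq dotBl !dotBr (dotC v u).
lra.
Qed.

End Dot.
Section QF.
Variable R : realType.

Definition qf n (M : 'M[R]_n) (v : 'cV[R]_n) : R := dot v (M *m v).

Lemma qf_tr n (M : 'M[R]_n) v : qf M^T v = qf M v.
Proof. by rewrite /qf dotMr trmxK dotC. Qed.

Lemma qf_upper n (M : 'M[R]_n) : exists2 c : R, 0 < c & forall v, qf M v <= c * nsq v.
Proof.
exists (\sum_(i < n) \sum_(j < n) `|M i j| + 1).
  by rewrite ltr_wpDl // sumr_ge0 // => i _; rewrite sumr_ge0.
move=> v.
have vb : forall i, v i 0 ^+ 2 <= nsq v.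
  move=> i; rewrite /nsq dotE (bigD1 i) //= -expr2 lerDl sumr_ge0 // => k _.
  by rewrite -expr2 sqr_ge0.
have H : qf M v <= (\sum_(i < n) \sum_(j < n) `|M i j|) * nsq v.
  rewrite /qf dotE mulr_suml; apply: ler_sum => i _.
  rewrite mxE mulr_sumr mulr_suml; apply: ler_sum => j _.
  apply: le_trans (real_ler_norm _) _; first exact: num_real.
  rewrite !normrM mulrCA ler_wpM2l //.
  have h1 := vb i; have h2 := vb j.
  have : `|v i 0| * `|v j 0| <= (v i 0 ^+ 2 + v j 0 ^+ 2) / 2.
    rewrite ler_pdivlMr // -[X in _ <= X + _]real_normK ?num_real //.
    rewrite -[X in _ <= _ + X]real_normK ?num_real //.
    have := sqr_ge0 (`|v i 0| - `|v j 0|); lra.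
  lra.
apply: le_trans H _; rewrite mulrDl mul1r lerDl; exact: nsq_ge0.
Qed.

Lemma qf_lower n (M N : 'M[R]_n) : M *m N = 1%:M -> M^T = M ->
  (forall v, 0 <= qf M v) -> exists2 m : R, 0 < m & forall v, m * nsq v <= qf M v.
Proof.
move=> MN Ms psd; have [c c0 Hc] := qf_upper N.
exists c^-1; first by rewrite invr_gt0.
move=> v; set l := c^-1 *: v.
have := psd (N *m l - v).
rewrite /qf mulmxBr mulmxA MN mul1mx dotBl !dotBr.
have -> : dot (N *m l) (M *m v) = dot l v.
  by rewrite dotMl mulmxA -{1}Ms -trmx_mul MN trmx1 mul1mx.
rewrite (dotC (N *m l)) -/(qf N l).
have := Hc l; rewrite /nsq /l dotZl dotZr !dotZl -/(nsq v) => Hl.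
rewrite (dotC v) -/(nsq v) => H.
have : c * (c^-1 * (c^-1 * nsq v)) = c^-1 * nsq v.
  by field; rewrite gt_eqF.
move: Hl; rewrite -!/(qf N l) => Hl E.
rewrite /qf /l in Hl H *; lra.
Qed.

Lemma posdef_psd n (M : 'M[R]_n) : posdef M -> forall v, 0 <= qf M v.
Proof.
move=> [_ H] v; have [->|v0] := eqVneq v 0; first by rewrite /qf mulmx0 dot0r.
by apply: ltW; have := H v v0; rewrite /qf /dot mulmxA.
Qed.

Lemma posdef_pos n (M : 'M[R]_n) (v : 'cV[R]_n) : posdef M -> v != 0 -> 0 < qf M v.
Proof. by move=> [_ H] v0; have := H v v0; rewrite /qf /dot mulmxA. Qed.

Lemma inj_unit n (M : 'M[R]_n) : (forall v : 'cV[R]_n, M *m v = 0 -> v = 0) -> M \in unitmx.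
Proof.
move=> H; rewrite unitmxE unitfE -det_tr; apply/negP => /det0P [v v0 vM].
move/negP: v0; apply; apply/eqP.
have : M *m v^T = 0 by rewrite -(trmxK M) -trmx_mul vM trmx0.
by move/H => /(congr1 trmx); rewrite trmxK trmx0.
Qed.

Lemma sym3_qf p q r (M11 : 'M[R]_p) (M12 : 'M[R]_(p, q))
  (M13 : 'M[R]_(p, r)) (M22 : 'M[R]_q) (M23 : 'M[R]_(q, r)) (M33 : 'M[R]_r)
  v1 v2 v3 :
  qf (sym3 M11 M12 M13 M22 M23 M33) (col_mx v1 (col_mx v2 v3)) =
  qf M11 v1 + 2 * dot v1 (M12 *m v2) + 2 * dot v1 (M13 *m v3)
  + qf M22 v2 + 2 * dot v2 (M23 *m v3) + qf M33 v3.
Proof.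
have addE m k (A B : 'M[R]_(m, k)) i j : (A + B) i j = A i j + B i j by rewrite mxE.
have tr1 m k (A : 'M[R]_(m, k)) (a : 'cV_m) (b : 'cV_k) : dot b (A^T *m a) = dot a (A *m b).
  by rewrite dotMr trmxK dotC.
rewrite /qf /sym3 {1}/dot mul_block_col !tr_col_mx.
rewrite !mul_col_mx !mul_row_col !add_col_mx !mul_row_col !mulmxDr !addE.
rewrite -!/(dot _ _) !tr1.
ring.
Qed.

End QF.
Section MVTsec.
Variable R : realType.

Lemma diff_jac n m (f : 'cV[R]_n -> 'cV[R]_m) v h :
  'd f v h = jac f v *m h.
Proof.
apply/matrixP => i j; rewrite ord1 {j}.
have -> : h = \sum_(j < n) h j 0 *: (delta_mx j 0 : 'cV[R]_n).
  apply/matrixP => a b; rewrite ord1 summxE (bigD1 a) //= !mxE eqxx /= mulr1.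
  rewrite big1 ?addr0 // => j ja; rewrite !mxE eq_sym (negbTE ja) /= mulr0 //.
rewrite linear_sum /= summxE mulmx_sumr summxE; apply: eq_bigr => j _.
rewrite linearZ /= -scalemxAr !mxE.
rewrite (bigD1 j) //= big1 ?addr0; last first.
  by move=> k kj; rewrite !mxE (negbTE kj) /= mulr0.
by rewrite !mxE !eqxx /= mulr1 mulrC.
Qed.

End MVTsec.
Section G.
Variable R : realType.
Lemma gamma_diff n (b h : 'cV[R]_n) (t : R) :
  differentiable (fun s : R => b + s *: h) t /\ 'd (fun s : R => b + s *: h) t 1 = h.
Proof.
have E : (fun s : R => b + s *: h) = cst b + ( *:%R^~ h) by apply/funext.
rewrite E.
have H1 : is_diff t (cst b) (0 : R -> 'cV[R]_n) by exact: is_diff_cst.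
have H2 : is_diff t ( *:%R^~ h) ( *:%R^~ h) by exact: is_diff_scalel.
have H := @is_diffD _ _ _ _ _ _ _ t H1 H2.
split; first exact: ex_diff.
by rewrite diff_val /= add0r scale1r.
Qed.
End G.
Section MV.
Variable R : realType.

Lemma mvt_sq n (f : 'cV[R]_n -> 'cV[R]_n) (al be : R) :
  (forall v, differentiable f v) -> (forall v, spec_norm_le (jac f v - al%:M) be) ->
  0 <= be ->
  forall a b, nsq (f a - f b - al *: (a - b)) <= be ^+ 2 * nsq (a - b).
Proof.
move=> df Hj be0 a b.
set h := a - b; set r := f a - f b - al *: h.
pose G := fun s : R => f (b + s *: h).
have dG : forall s, differentiable G s /\ 'D_1 G s = jac f (b + s *: h) *m h.
  move=> s; have [d1 d2] := gamma_diff b h s.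
  have dc : differentiable G s.
    have : differentiable (f \o (fun s0 => b + s0 *: h)) s.
      by apply: differentiable_comp => //; exact: df.
    by [].
  split => //; rewrite deriveE //.
  have -> : G = f \o (fun s0 : R => b + s0 *: h) by [].
  by rewrite diff_comp //= ?d2 ?diff_jac //; exact: df.
pose k := al * dot r h.
pose phi : R -> R := \sum_(i < n) (fun s => r i 0 * G s i 0) - (fun s => k * s).
have phiE : forall s, phi s = dot r (G s) - k * s.
  by move=> s; rewrite /phi /= fct_sumE dotE.
have dphi : forall s : R, is_derive s (1 : R) phi (dot r (jac f (b + s *: h) *m h) - k).
  move=> s; rewrite /phi dotE.
  apply: is_deriveB.
  - apply: is_derive_sum => i.
    have [dc dv] := dG s.
    have der : derivable G s 1 := diff_derivable dc.
    have Di : derivable (fun s => G s i 0) s 1 by move/derivable_mxP: der.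
    have Dv : 'D_1 (fun s => G s i 0) s = (jac f (b + s *: h) *m h) i 0.
      by rewrite -dv derive_mx // mxE.
    have Hi : is_derive s 1 (fun s => G s i 0) ((jac f (b + s *: h) *m h) i 0).
      exact: DeriveDef.
    exact: (is_deriveZ (r i 0) Hi).
  - have := is_deriveZ k (is_derive_id s 1).
    by move=> H; apply: is_derive_eq H _; exact: mulr1.
have [c _ Hc] : exists2 c, c \in `[0, 1]%R & phi 1 - phi 0 = (dot r (jac f (b + c *: h) *m h) - k) * (1 - 0).
  apply: (@MVT_segment R phi (fun c => dot r (jac f (b + c *: h) *m h) - k) 0 1) => //.
  - apply: derivable_within_continuous => x _.
    exact: (@ex_derive _ _ _ _ _ _ _ (dphi x)).
  all: try by move=> x _; exact: dphi.
move: Hc; rewrite !phiE /G scale1r scale0r addr0 !mulr1 mulr0 !subr0 mulr1.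
have -> : b + h = a by rewrite /h addrC subrK.
set g := (jac f (b + c *: h) - al%:M) *m h.
have gE : dot r (jac f (b + c *: h) *m h) - k = dot r g.
  by rewrite /g /k mulmxBl mul_scalar_mx !(dotBr, dotZr).
rewrite gE => E.
have nr : nsq r = dot r g.
  move: E; rewrite /nsq /k => <-; rewrite /r /h !(dotBr, dotBl, dotZr, dotZl); ring.
have ng : nsq g <= be ^+ 2 * nsq h.
  have := Hj (b + c *: h) h; rewrite -/g => H.
  rewrite -!enorm_sqr -exprMn ler_pXn2r ?nnegrE ?mulr_ge0 ?enorm_ge0 //.
have := cs_eps r g; rewrite -nr => H.
lra.
Qed.

End MV.
Section Steps.
Variable R : realType.

Lemma qfN n (M : 'M[R]_n) v : qf M (- v) = qf M v.
Proof. by rewrite /qf mulmxN dotNl dotNr opprK. Qed.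

Lemma obs_step nx ny (A Q U : 'M[R]_nx) (C : 'M[R]_(ny, nx)) (V L : 'M[R]_(nx, ny))
  (al be eta rho : R) e d :
  U *m L = V -> 0 < eta ->
  (forall v, 0 <= qf (sym3 ((1 - rho) *: Q - eta *: (C^T *m C))
               (U *m A + al *: (V *m C))^T (0 : 'M[R]_(nx, ny))
               (U + U^T - Q) (be *: V) (eta%:M : 'M[R]_ny)) v) ->
  nsq (d - al *: (C *m e)) <= be ^+ 2 * nsq (C *m e) ->
  qf Q (A *m e + L *m d) <= (1 - rho) * qf Q e.
Proof.
move=> UL eta0 psd Hd.
set e' := A *m e + L *m d; set z := C *m e; set r := d - al *: z.
set s := be^-1 *: r.
have [Hs1 Hs2] : be *: s = r /\ nsq s <= nsq z.
  have [be0|be0] := eqVneq be 0.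
    move: Hd; rewrite -/z -/r be0 expr0n mul0r => Hr.
    have r0 : r = 0 by apply: nsq_eq0; apply/eqP; rewrite eq_le Hr nsq_ge0.
    by rewrite /s r0 be0 !scaler0 /nsq dot0l nsq_ge0.
  split; first by rewrite /s scalerA divff // scale1r.
  rewrite /s /nsq dotZl dotZr -/(nsq r) mulrA -expr2 exprVn.
  rewrite ler_pdivrMl; last by rewrite lt_def sqrf_eq0 be0 /= sqr_ge0.
  rewrite mulrC; move: Hd; rewrite -/z -/r.
  by rewrite mulrC.
have H := psd (col_mx e (col_mx (- e') s)).
rewrite sym3_qf in H.
have T1 : qf ((1 - rho) *: Q - eta *: (C^T *m C)) e = (1 - rho) * qf Q e - eta * nsq z.
  by rewrite /qf mulmxBl -!scalemxAl dotBr !dotZr -mulmxA [dot e (C^T *m _)]dotMr trmxK.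
have T2 : dot e ((U *m A + al *: (V *m C))^T *m (- e'))
          = - (dot e' (U *m (A *m e)) + al * dot e' (V *m z)).
  rewrite mulmxN dotNr -dotMl dotC mulmxDl -scalemxAl dotDr dotZr.
  by rewrite -!mulmxA.
have T3 : dot e ((0 : 'M[R]_(nx, ny)) *m s) = 0 by rewrite mul0mx dot0r.
have T4 : qf (U + U^T - Q) (- e') = 2 * dot e' (U *m e') - qf Q e'.
  rewrite qfN {1}/qf mulmxBl mulmxDl dotBr dotDr -/(qf Q e').
  by rewrite -/(qf U^T e') qf_tr /qf; ring.
have T5 : dot (- e') ((be *: V) *m s) = - dot e' (V *m r).
  by rewrite dotNl -scalemxAl scalemxAr Hs1.
have T6 : qf (eta%:M) s = eta * nsq s by rewrite /qf mul_scalar_mx dotZr.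
have K : dot e' (U *m e') = dot e' (U *m (A *m e)) + al * dot e' (V *m z) + dot e' (V *m r).
  rewrite {2}/e' mulmxDr (mulmxA U L) UL /r mulmxBr -scalemxAr dotDr !dotBr dotZr.
  ring.
rewrite T1 T2 T3 T4 T5 T6 in H.
have : eta * nsq s <= eta * nsq z by rewrite ler_pM2l.
rewrite /qf in H K *.
lra.
Qed.

Lemma ctrl_step nx nu (A P Y : 'M[R]_nx) (B : 'M[R]_(nx, nu)) (X : 'M[R]_(nu, nx))
  (al be sigma rho : R) x d :
  P \in unitmx -> Y \in unitmx -> P^T = P -> 0 < sigma -> 0 <= be ->
  (forall v, 0 <= qf (sym3 ((1 - rho) *: P - sigma *: (B *m B^T))
               (A *m Y + al *: (B *m X)) (0 : 'M[R]_(nx, nu))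
               (Y^T + Y - P) (be *: X^T) (sigma%:M : 'M[R]_nu)) v) ->
  (forall v, 0 <= qf P v) ->
  nsq (d - al *: (X *m invmx Y *m x)) <= be ^+ 2 * nsq (X *m invmx Y *m x) ->
  (1 + rho) * qf (invmx P) (A *m x + B *m d) <= qf (invmx P) x.
Proof.
move=> Pu Yu Ps sig0 be0 psd Ppsd Hd.
set Pi := invmx P; set x'' := A *m x + B *m d; set lam := Pi *m x''.
set w := invmx Y *m x; set kx := X *m invmx Y *m x; set r := d - al *: kx.
set g := B^T *m lam.
set c := dot r g / (be * nsq kx).
set s := c *: kx.
have [S1 S2] : be * dot kx s = dot r g /\ nsq s <= nsq g.
  have [E|E] := eqVneq (be * nsq kx) 0.
    have r0 : r = 0.
      apply: nsq_eq0; apply/eqP; rewrite eq_le nsq_ge0 andbT.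
      by move: Hd; rewrite -/kx -/r expr2 -mulrA E mulr0.
    have c0 : c = 0 by rewrite /c r0 dot0l mul0r.
    by rewrite /s c0 scale0r dot0r mulr0 r0 dot0l /nsq dot0l nsq_ge0.
  have bp : 0 < be by rewrite lt_def be0 andbT; apply: contraNneq E => ->; rewrite mul0r.
  have kp : 0 < nsq kx by rewrite lt_def nsq_ge0 andbT; apply: contraNneq E => ->; rewrite mulr0.
  split.
    by rewrite /s dotZr -/(nsq kx) /c; field; rewrite ?gt_eqF.
  rewrite /s /nsq dotZl dotZr -/(nsq kx) mulrA /c.
  have cs := cauchy_dot r g.
  have Hd' : nsq r <= be ^+ 2 * nsq kx by [].
  have : dot r g ^+ 2 <= be ^+ 2 * nsq kx * nsq g.
    apply: le_trans cs _; apply: ler_wpM2r => //; exact: nsq_ge0.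
  move=> H2.
  have -> : dot r g / (be * nsq kx) * (dot r g / (be * nsq kx)) * nsq kx
            = dot r g ^+ 2 / (be ^+ 2 * nsq kx).
    by field; rewrite !gt_eqF.
  rewrite ler_pdivrMr ?mulr_gt0 ?exprn_gt0 //.
  by rewrite mulrC.
have H := psd (col_mx lam (col_mx (- w) s)).
rewrite sym3_qf in H.
have Yw : Y *m w = x by rewrite /w mulmxA mulmxV // mul1mx.
have Xw : X *m w = kx by rewrite /w /kx mulmxA.
have T1 : qf ((1 - rho) *: P - sigma *: (B *m B^T)) lam = (1 - rho) * qf P lam - sigma * nsq g.
  by rewrite /qf mulmxBl -!scalemxAl dotBr !dotZr -mulmxA [dot lam (B *m _)]dotMr.
have T2 : dot lam ((A *m Y + al *: (B *m X)) *m (- w)) = - (dot lam (A *m x) + al * dot lam (B *m kx)).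
  by rewrite mulmxN dotNr mulmxDl -scalemxAl dotDr dotZr -!mulmxA Yw Xw.
have T3 : dot lam ((0 : 'M[R]_(nx, nu)) *m s) = 0 by rewrite mul0mx dot0r.
have T4 : qf (Y^T + Y - P) (- w) = 2 * dot w x - qf P w.
  rewrite qfN {1}/qf mulmxBl mulmxDl dotBr dotDr -/(qf P w).
  by rewrite -/(qf Y^T w) qf_tr /qf Yw; ring.
have T5 : dot (- w) ((be *: X^T) *m s) = - dot r g.
  by rewrite dotNl -scalemxAl dotZr -dotMl Xw S1.
have T6 : qf (sigma%:M) s = sigma * nsq s by rewrite /qf mul_scalar_mx dotZr.
have K1 : dot r g = dot lam (B *m r) by rewrite /g -dotMl dotC.
have K2 : dot lam x'' = dot lam (A *m x) + al * dot lam (B *m kx) + dot lam (B *m r).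
  rewrite /x'' /r mulmxBr -scalemxAr !(dotDr, dotBr, dotNr, dotZr); ring.
have PiP : P *m Pi = 1%:M by rewrite mulmxV.
have K3 : qf P lam = qf Pi x''.
  by rewrite /qf /lam mulmxA PiP mul1mx dotC.
have K4 : dot lam x'' = qf Pi x'' by rewrite /qf /lam dotC.
have K5 : 2 * dot w x - qf P w <= qf Pi x.
  have := Ppsd (w - Pi *m x).
  rewrite /qf mulmxBr (mulmxA P Pi x) PiP mul1mx !dotBl !dotBr.
  have -> : dot (Pi *m x) (P *m w) = dot x w by rewrite dotMr Ps (mulmxA P Pi x) PiP mul1mx.
  rewrite (dotC x w) (dotC (Pi *m x) x); lra.
rewrite T1 T2 T3 T4 T5 T6 K1 in H.
have : sigma * nsq s <= sigma * nsq g by rewrite ler_pM2l.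
move: K2 K3 K4 K5 H; rewrite /qf => K2 K3 K4 K5 H.
nra.
Qed.

End Steps.
Section Helpers.
Variable R : realType.

Lemma qf0 n (M : 'M[R]_n) : qf M 0 = 0.
Proof. by rewrite /qf mulmx0 dot0r. Qed.

Lemma mid_unit p q r (M11 : 'M[R]_p) (M12 : 'M[R]_(p, q)) (M13 : 'M[R]_(p, r))
  (M22 : 'M[R]_q) (M23 : 'M[R]_(q, r)) (M33 : 'M[R]_r) (Y P : 'M[R]_q) :
  posdef (sym3 M11 M12 M13 M22 M23 M33) ->
  (forall v, qf M22 v = qf Y v + qf Y v - qf P v) -> (forall v, 0 <= qf P v) ->
  Y \in unitmx.
Proof.
move=> Hpd E Ppsd; apply: inj_unit => v Yv.
apply/eqP; apply: contraT => v0.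
have ne : col_mx (0 : 'cV[R]_p) (col_mx v (0 : 'cV[R]_r)) != 0.
  by rewrite !col_mx_eq0 (negbTE v0) /= andbF.
have := posdef_pos Hpd ne.
rewrite sym3_qf !qf0 !mulmx0 !dot0r dot0l E {1 2}/qf Yv dot0r => H.
exfalso; have := Ppsd v; lra.
Qed.

Lemma nsq_add2 n (a b : 'cV[R]_n) : nsq (a + b) <= 2 * nsq a + 2 * nsq b.
Proof.
have := cs_eps a b.
rewrite /nsq !dotDl !dotDr (dotC b a); lra.
Qed.

Lemma nsq_qf m n (K : 'M[R]_(m, n)) v : nsq (K *m v) = qf (K^T *m K) v.
Proof. by rewrite /nsq /qf dotMl mulmxA. Qed.

Lemma qf_add_eps n (M : 'M[R]_n) (eps : R) a b : M^T = M -> (forall v, 0 <= qf M v) ->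
  0 < eps -> qf M (a + b) <= (1 + eps) * qf M a + (1 + eps^-1) * qf M b.
Proof.
move=> Ms psd e0.
have sym : dot b (M *m a) = dot a (M *m b) by rewrite dotMr Ms dotC.
have := psd (eps *: a - b).
rewrite /qf mulmxBr -scalemxAr !(dotBl, dotBr, dotZl, dotZr) sym.
rewrite mulmxDr !(dotDl, dotDr) sym.
set A := dot a (M *m a); set B := dot b (M *m b); set t := dot a (M *m b) => H.
have H2 : 0 <= eps^-1 * (eps * (eps * A - t) - (eps * t - B)).
  by apply: mulr_ge0 => //; rewrite invr_ge0 ltW.
have E : eps^-1 * (eps * (eps * A - t) - (eps * t - B)) = eps * A - 2 * t + eps^-1 * B.
  by field; rewrite gt_eqF.
rewrite E in H2.
lra.
Qed.

Lemma sqrt_step (a b : R) : 0 <= a -> 0 <= b -> a ^+ 2 <= b ^+ 2 -> a <= b.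
Proof. by move=> a0 b0; rewrite ler_pXn2r ?nnegrE. Qed.

End Helpers.

Section Helpers2.
Variable R : realType.
Lemma qfD n (M N : 'M[R]_n) v : qf (M + N) v = qf M v + qf N v.
Proof. by rewrite /qf mulmxDl dotDr. Qed.
Lemma qfB n (M N : 'M[R]_n) v : qf (M - N) v = qf M v - qf N v.
Proof. by rewrite /qf mulmxBl dotBr. Qed.
Lemma nsqZ n (a : R) (v : 'cV[R]_n) : nsq (a *: v) = a ^+ 2 * nsq v.
Proof. by rewrite /nsq dotZl dotZr mulrA expr2. Qed.
End Helpers2.
Lemma zm2 (W : zmodType) (a b d : W) : a + b - (d + b) = a - d.
Proof. by rewrite opprD addrACA subrr addr0. Qed.
Lemma zm1 (W : zmodType) (a b c d : W) : a + b + c - (d + b) = (a - d) + c.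
Proof. by rewrite addrAC zm2. Qed.
Lemma zm3 (W : zmodType) (a b c : W) : a + c = (a + b) + (c - b).
Proof. by rewrite addrACA subrr addr0. Qed.

Unset Implicit Arguments.
Set Strict Implicit.
Theorem mainTheorem6 (R : realType) (nx nu ny : nat)
  (A : 'M[R]_nx) (B : 'M[R]_(nx, nu)) (C : 'M[R]_(ny, nx)) (D : 'M[R]_(ny, nu))
  (mu_u nu_u mu_y nu_y : R)
  (P Y : 'M[R]_nx) (X : 'M[R]_(nu, nx)) (sigma rho_c : R)
  (Q U : 'M[R]_nx) (V : 'M[R]_(nx, ny)) (eta rho_o : R)
  (Su : 'cV[R]_nu -> 'cV[R]_nu) (Sy : 'cV[R]_ny -> 'cV[R]_ny) :
  0 < mu_u -> mu_u <= nu_u -> 0 < mu_y -> mu_y <= nu_y ->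
  let alpha_u := (nu_u + mu_u) / 2 in
  let beta_u := (nu_u - mu_u) / 2 in
  let alpha_y := (nu_y + mu_y) / 2 in
  let beta_y := (nu_y - mu_y) / 2 in
  (* LMI (a) *)
  posdef P -> 0 < sigma -> 0 < rho_c < 1 ->
  posdef (sym3 ((1 - rho_c) *: P - sigma *: (B *m B^T))
               (A *m Y + alpha_u *: (B *m X)) (0 : 'M[R]_(nx, nu))
               (Y^T + Y - P) (beta_u *: X^T) (sigma%:M : 'M[R]_nu)) ->
  (* LMI (b) *)
  posdef Q -> 0 < eta -> 0 < rho_o < 1 ->
  posdef (sym3 ((1 - rho_o) *: Q - eta *: (C^T *m C))
               (U *m A + alpha_y *: (V *m C))^T (0 : 'M[R]_(nx, ny))
               (U + U^T - Q) (beta_y *: V) (eta%:M : 'M[R]_ny)) ->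
  let K := X *m invmx Y in
  let L := invmx U *m V in
  (* scaffolding nonlinearities *)
  C1 Su -> Su 0 = 0 ->
  (forall v, spec_norm_le (jac Su v - alpha_u%:M) beta_u) ->
  C1 Sy ->
  (forall z, spec_norm_le (jac Sy z - alpha_y%:M) beta_y) ->
  exists c lambda : R, 0 < c /\ 0 < lambda < 1 /\
    forall (x xh : nat -> 'cV[R]_nx),
      (forall k,
         let u := K *m xh k in
         let y := Sy (C *m x k + D *m Su u) in
         let yh := Sy (C *m xh k + D *m Su u) in
         x k.+1 = A *m x k + B *m Su u /\
         xh k.+1 = A *m xh k + B *m Su u + L *m (yh - y)) ->
      forall k, enorm (x k) + enorm (xh k - x k)
                <= c * lambda ^+ k * (enorm (x 0%N) + enorm (xh 0%N - x 0%N)).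
Proof.
move=> mu0 mumu muy0 muymu al_u be_u al_y be_y Ppd sig0 /andP[rc0 rc1] LMIa
  Qpd eta0 /andP[ro0 ro1] LMIb K L [dSu _] Su0 Ju [dSy _] Jy.
have beu0 : 0 <= be_u by rewrite /be_u divr_ge0 // subr_ge0.
have bey0 : 0 <= be_y by rewrite /be_y divr_ge0 // subr_ge0.
have psdA := posdef_psd LMIa; have psdB := posdef_psd LMIb.
have Ppsd := posdef_psd Ppd; have Qpsd := posdef_psd Qpd.
have Ps : P^T = P by case: Ppd.
have Qs : Q^T = Q by case: Qpd.
have Punit : P \in unitmx.
  apply: inj_unit => v Pv; apply/eqP; apply: contraT => v0.
  by have := posdef_pos Ppd v0; rewrite /qf Pv dot0r ltxx.
have Qunit : Q \in unitmx.
  apply: inj_unit => v Pv; apply/eqP; apply: contraT => v0.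
  by have := posdef_pos Qpd v0; rewrite /qf Pv dot0r ltxx.
have Yunit : Y \in unitmx.
  by apply: (mid_unit LMIa _ Ppsd) => v; rewrite qfB qfD qf_tr.
have Uunit : U \in unitmx.
  by apply: (mid_unit LMIb _ Qpsd) => v; rewrite qfB qfD qf_tr.
have UL : U *m L = V by rewrite /L mulmxA mulmxV // mul1mx.
set Pi := invmx P.
have Pis : Pi^T = Pi by rewrite /Pi trmx_inv Ps.
have PiP : Pi *m P = 1%:M by rewrite mulVmx.
have Pipsd : forall v, 0 <= qf Pi v.
  move=> v; have := Ppsd (Pi *m v).
  by rewrite /qf (mulmxA P Pi v) mulmxV // mul1mx dotC.
have [mP mP0 HmP] := qf_lower PiP Pis Pipsd.
have [MP MP0 HMP] := qf_upper Pi.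
have [mQ mQ0 HmQ] := qf_lower (mulmxV Qunit) Qs Qpsd.
have [MQ MQ0 HMQ] := qf_upper Q.
have [cK cK0 HcK] := qf_upper (K^T *m K).
have [cB cB0 HcB] := qf_upper (B^T *m B).
have HSu := mvt_sq dSu Ju beu0.
have HSy := mvt_sq dSy Jy bey0.
have Hc : forall x, (1 + rho_c) * qf Pi (A *m x + B *m Su (K *m x)) <= qf Pi x.
  move=> x; apply: (ctrl_step Punit Yunit Ps sig0 beu0 psdA Ppsd).
  by have := HSu (K *m x) 0; rewrite Su0 !subr0.
have Ho : forall e d, nsq (d - al_y *: (C *m e)) <= be_y ^+ 2 * nsq (C *m e) ->
    qf Q (A *m e + L *m d) <= (1 - rho_o) * qf Q e.
  by move=> e d; apply: (obs_step UL eta0 psdB).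
pose eps := rho_c / 2.
have eps0 : 0 < eps by rewrite /eps divr_gt0.
pose q := (1 + eps) / (1 + rho_c).
pose C1' := MP * cB * (2 * (be_u ^+ 2 + al_u ^+ 2)) * cK.
pose C2 := (1 + eps^-1) * C1'.
have C1'0 : 0 <= C1'.
  rewrite /C1'; apply: mulr_ge0; last exact: ltW.
  apply: mulr_ge0; last by apply: mulr_ge0 => //; apply: addr_ge0; exact: sqr_ge0.
  by apply: mulr_ge0; exact: ltW.
have C20 : 0 <= C2.
  by rewrite /C2; apply: mulr_ge0 => //; apply: addr_ge0 => //; rewrite invr_ge0 ltW.
pose gam := 2 * C2 / (mQ * rho_o) + 1.
have gam0 : 0 < gam.
  rewrite /gam ltr_wpDl //; apply: divr_ge0; first exact: mulr_ge0.
  by apply: mulr_ge0; exact: ltW.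
pose th := Num.max q (1 - rho_o / 2).
have q1 : q < 1 by rewrite /q ltr_pdivrMr ?mul1r ?addr_gt0 // ltrD2l /eps; lra.
have qth : q <= th by rewrite /th le_max lexx.
have oth : 1 - rho_o / 2 <= th by rewrite /th le_max lexx orbT.
have th1 : th < 1 by rewrite /th gt_max q1 /=; lra.
have th0 : 0 <= th by apply: le_trans oth; lra.
pose lam := (1 + th) / 2.
have lam0 : 0 < lam by rewrite /lam; lra.
have lam1 : lam < 1 by rewrite /lam; lra.
have thlam : th <= lam ^+ 2.
  rewrite /lam; have := sqr_ge0 (1 - th); rewrite expr2 => H; rewrite expr2; nra.
pose mZ := Num.min mP (gam * mQ).
have mZ0 : 0 < mZ by rewrite /mZ lt_min mP0 mulr_gt0.
pose MZ := MP + gam * MQ.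
have MZ0 : 0 < MZ by rewrite /MZ addr_gt0 // mulr_gt0.
pose c := 2 * MZ / mZ + 1.
have t0 : 0 <= 2 * MZ / mZ.
  by apply: divr_ge0; [apply: mulr_ge0 => //; exact: ltW | exact: ltW].
have c0 : 0 < c by rewrite /c ltr_wpDl.
have MP0' := ltW MP0; have cB0' := ltW cB0; have cK0' := ltW cK0.
have mQ0' := ltW mQ0; have gam0' := ltW gam0; have mP0' := ltW mP0.
have MZ0' := ltW MZ0; have mZ0' := ltW mZ0; have eps0' := ltW eps0.
have MQ0' := ltW MQ0; have rc0' := ltW rc0.
exists c, lam; split => //; split; first by rewrite lam0 lam1.
move=> x xh Hd.
pose Z k := qf Pi (x k) + gam * qf Q (xh k - x k).
have step : forall k, Z k.+1 <= th * Z k.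
  move=> k; move: (Hd k) => /= [E1 E2].
  set s := Su (K *m xh k) in E1 E2.
  set dy := Sy (C *m xh k + D *m s) - Sy (C *m x k + D *m s) in E2.
  set e := xh k - x k.
  have Ee : xh k.+1 - x k.+1 = A *m e + L *m dy.
    by rewrite E1 E2 zm1 -mulmxBr.
  have Hw : qf Q (xh k.+1 - x k.+1) <= (1 - rho_o) * qf Q e.
    rewrite Ee; apply: Ho.
    have := HSy (C *m xh k + D *m s) (C *m x k + D *m s).
    have -> : C *m xh k + D *m s - (C *m x k + D *m s) = C *m e.
      by rewrite zm2 -mulmxBr.
    by [].
  set x2 := A *m x k + B *m Su (K *m x k).
  set dl := s - Su (K *m x k).
  have Ex : x k.+1 = x2 + B *m dl.
    by rewrite E1 /x2 /dl (zm3 _ (B *m Su (K *m x k))) -mulmxBr.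
  have h1 := qf_add_eps x2 (B *m dl) Pis Pipsd eps0.
  rewrite -Ex in h1.
  have h2 := Hc (x k); rewrite -/x2 in h2.
  have h3 : qf Pi (B *m dl) <= MP * (cB * nsq dl).
    apply: le_trans (HMP _) _; rewrite ler_wpM2l // nsq_qf. exact: HcB.
  have h4 : nsq dl <= 2 * (be_u ^+ 2 + al_u ^+ 2) * nsq (K *m e).
    have := HSu (K *m xh k) (K *m x k); rewrite -mulmxBr -/e -/s -/dl => H.
    have := nsq_add2 (dl - al_u *: (K *m e)) (al_u *: (K *m e)).
    rewrite subrK nsqZ; lra.
  have h5 : nsq (K *m e) <= cK * nsq e by rewrite nsq_qf; exact: HcK.
  have h6 : mQ * nsq e <= qf Q e by exact: HmQ.
  have h7 := Pipsd (x k); have h8 := Qpsd e; have h9 := nsq_ge0 e.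
  have h10 := nsq_ge0 dl; have h11 := nsq_ge0 (K *m e).
  have h45 : nsq dl <= 2 * (be_u ^+ 2 + al_u ^+ 2) * (cK * nsq e).
    apply: le_trans h4 _; apply: ler_wpM2l => //; apply: mulr_ge0 => //.
    by apply: addr_ge0; exact: sqr_ge0.
  have Vb : qf Pi (B *m dl) <= C1' * nsq e.
    apply: le_trans h3 _.
    have -> : C1' * nsq e = MP * (cB * (2 * (be_u ^+ 2 + al_u ^+ 2) * (cK * nsq e))).
      by rewrite /C1'; ring.
    by rewrite ler_wpM2l // ler_wpM2l.
  have Vb2 : (1 + eps^-1) * qf Pi (B *m dl) <= C2 / mQ * qf Q e.
    apply: le_trans (ler_wpM2l _ Vb) _; first by rewrite addr_ge0 // invr_ge0 ltW.
    rewrite mulrA -/C2 -mulrA ler_wpM2l //.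
    by rewrite mulrC ler_pdivlMr // mulrC.
  have V2 : (1 + eps) * qf Pi x2 <= q * qf Pi (x k).
    have V2' : qf Pi x2 <= qf Pi (x k) / (1 + rho_c).
      by rewrite ler_pdivlMr ?addr_gt0 // mulrC.
    have -> : q * qf Pi (x k) = (1 + eps) * (qf Pi (x k) / (1 + rho_c)).
      by rewrite /q; field; rewrite gt_eqF // addr_gt0.
    by rewrite ler_wpM2l // addr_ge0.
  have G : C2 / mQ = (gam - 1) * rho_o / 2.
    by rewrite /gam addrK; field; rewrite !gt_eqF.
  rewrite /Z -/e.
  have Wn0 := Qpsd (xh k.+1 - x k.+1).
  have : qf Pi (x k.+1) + gam * qf Q (xh k.+1 - x k.+1)
         <= q * qf Pi (x k) + gam * (1 - rho_o / 2) * qf Q e.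
    have : gam * qf Q (xh k.+1 - x k.+1) <= gam * ((1 - rho_o) * qf Q e).
      by rewrite ler_wpM2l // ltW.
    rewrite G in Vb2.
    nra.
  move=> H; apply: le_trans H _.
  rewrite (mulrDr th); apply: lerD.
    by rewrite ler_wpM2r.
  by rewrite mulrCA -mulrA ler_wpM2l // ler_wpM2r.
have Zk : forall k, Z k <= th ^+ k * Z 0%N.
  elim => [|k IH]; first by rewrite expr0 mul1r.
  apply: le_trans (step k) _; rewrite exprS -mulrA ler_wpM2l //.
move=> k.
set a := enorm (x k); set b := enorm (xh k - x k).
set a0 := enorm (x 0%N); set b0 := enorm (xh 0%N - x 0%N).
have a_0 : 0 <= a := enorm_ge0 _. have b_0 : 0 <= b := enorm_ge0 _.
have a0_0 : 0 <= a0 := enorm_ge0 _. have b0_0 : 0 <= b0 := enorm_ge0 _.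
have low : mZ * (a ^+ 2 + b ^+ 2) <= Z k.
  rewrite /a /b !enorm_sqr /Z mulrDr; apply: lerD.
    apply: le_trans (HmP _); rewrite ler_wpM2r ?nsq_ge0 // /mZ ge_min lexx //.
  apply: le_trans (_ : gam * mQ * nsq (xh k - x k) <= _).
    by rewrite ler_wpM2r ?nsq_ge0 // /mZ ge_min lexx orbT.
  by rewrite -mulrA ler_wpM2l //; exact: HmQ.
have up : Z 0%N <= MZ * (a0 ^+ 2 + b0 ^+ 2).
  rewrite /a0 /b0 !enorm_sqr /Z /MZ.
  have := HMP (x 0%N); have := HMQ (xh 0%N - x 0%N).
  have := nsq_ge0 (x 0%N); have := nsq_ge0 (xh 0%N - x 0%N).
  have := Qpsd (xh 0%N - x 0%N); have := Pipsd (x 0%N).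
  move=> h1 h2 h3 h4 h5 h6.
  have : gam * qf Q (xh 0%N - x 0%N) <= gam * (MQ * nsq (xh 0%N - x 0%N)).
    by rewrite ler_wpM2l //.
  have := mulr_ge0 MP0' h3; have := mulr_ge0 (mulr_ge0 gam0' MQ0') h4.
  nra.
have thk : th ^+ k <= (lam ^+ k) ^+ 2.
  by rewrite -exprM mulnC exprM lerXn2r ?nnegrE ?sqr_ge0.
have thk0 : 0 <= th ^+ k by rewrite exprn_ge0.
have S0 : a0 ^+ 2 + b0 ^+ 2 <= (a0 + b0) ^+ 2 by nra.
have S : (a + b) ^+ 2 <= 2 * (a ^+ 2 + b ^+ 2) by have := sqr_ge0 (a - b); nra.
have Z0 : 0 <= Z 0%N by rewrite /Z addr_ge0 // mulr_ge0 // ltW.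
have key : mZ * (a ^+ 2 + b ^+ 2) <= MZ * (lam ^+ k) ^+ 2 * (a0 + b0) ^+ 2.
  apply: le_trans low _; apply: le_trans (Zk k) _.
  apply: le_trans (_ : th ^+ k * (MZ * (a0 ^+ 2 + b0 ^+ 2)) <= _).
    by rewrite ler_wpM2l.
  rewrite mulrCA -mulrA ler_wpM2l //.
  apply: le_trans (_ : (lam ^+ k) ^+ 2 * (a0 ^+ 2 + b0 ^+ 2) <= _).
    by rewrite ler_wpM2r // addr_ge0 // sqr_ge0.
  by rewrite ler_wpM2l // sqr_ge0.
apply: sqrt_step.
- by rewrite addr_ge0.
- by rewrite !mulr_ge0 ?exprn_ge0 ?addr_ge0 // ltW.
set T := (lam ^+ k) ^+ 2 * (a0 + b0) ^+ 2.
have T0 : 0 <= T by rewrite /T mulr_ge0 // sqr_ge0.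
have -> : (c * lam ^+ k * (a0 + b0)) ^+ 2 = c ^+ 2 * T by rewrite /T; ring.
have cbig : 2 * MZ / mZ <= c ^+ 2.
  rewrite /c; set t := 2 * MZ / mZ.
  nra.
have : (a ^+ 2 + b ^+ 2) <= MZ / mZ * T.
  have E : mZ * (MZ / mZ * T) = MZ * T by field; rewrite gt_eqF.
  by rewrite -(ler_pM2l mZ0) E /T mulrA.
move=> H.
apply: le_trans S _.
apply: le_trans (_ : 2 * (MZ / mZ * T) <= _).
  by rewrite ler_wpM2l.
rewrite mulrA; apply: ler_wpM2r => //.
by rewrite mulrA.
Qed.
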